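(* Let $\mathbb{K}$ be a field of characteristic $0$, let $(\mathcal{P},\cdot,\{\,,\})$ be a Poisson superalgebra over $\mathbb{K}$, and let $xy=x\cdot y+\{x,y\}$ be the associated nonassociative product. Let $y\in\mathcal{P}$ be homogeneous (of degree $0$ or $1$). Define $y^1=y$ and $y^{n}=y\,y^{n-1}$ for $n\ge2$. Then $y^p y^q=y^{p+q}$ for all integers $p,q\ge1$; consequently the subalgebra of $(\mathcal{P},xy)$ generated by $y$ is associative. Moreover, if $y$ is odd, then $y\cdot y=0$ and $y^2=\{y,y\}$.
   Context: A super vector space is a $\mathbb{Z}_2$-graded vector space $\mathcal{P}=\mathcal{P}_0\oplus\mathcal{P}_1$; $|x|\in\{0,1\}$ denotes the degree of a homogeneous element $x$ (odd means degree $1$). A Poisson superalgebra is a super vector space with two even bilinear products $x\cdot y$ and $\{x,y\}$ such that $(\mathcal{P},\cdot)$ is associative and supercommutative ($x\cdot y=(-1)^{|x||y|}y\cdot x$), $(\mathcal{P},\{\,,\})$ is a Lie superalgebra ($\{x,y\}=-(-1)^{|x||y|}\{y,x\}$ and $(-1)^{|z||x|}\{x,\{y,z\}\}+(-1)^{|x||y|}\{y,\{z,x\}\}+(-1)^{|y||z|}\{z,\{x,y\}\}=0$), and the super Leibniz rule $\{x,y\cdot z\}=\{x,y\}\cdot z+(-1)^{|x||y|}y\cdot\{x,z\}$ holds, for homogeneous $x,y,z$. *)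

(* Defs.v *)
From HB Require Import structures.
From mathcomp Require Import all_boot all_order all_algebra.
Set Implicit Arguments. Unset Strict Implicit. Unset Printing Implicit Defensive.
Import GRing.Theory.
Local Open Scope ring_scope.

(* Sign (-1)^(a b) for degrees a b : bool (false = even = 0, true = odd = 1). *)
Definition ssign (K : fieldType) (a b : bool) : K := (-1) ^+ (a && b).

(* A super vector space structure on P is given by the predicates
   [hom false] (= P_0) and [hom true] (= P_1), which must be subspaces
   with P = P_0 (+) P_1 (direct sum). *)
Record super_space (K : fieldType) (P : lmodType K) (hom : bool -> pred P) : Prop := {
  hom0 : forall b, hom b 0;
  homD : forall b x y, hom b x -> hom b y -> hom b (x + y);
  homZ : forall b (k : K) x, hom b x -> hom b (k *: x);
  hom_decomp : forall x, exists x0 x1, [/\ hom false x0, hom true x1 & x = x0 + x1];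
  hom_direct : forall x, hom false x -> hom true x -> x = 0
}.

Definition bilinear_op (K : fieldType) (P : lmodType K) (op : P -> P -> P) : Prop :=
  (forall (k : K) x y z, op (k *: x + y) z = k *: op x z + op y z) /\
  (forall (k : K) x y z, op x (k *: y + z) = k *: op x y + op x z).

Record poisson_superalgebra (K : fieldType) (P : lmodType K)
    (hom : bool -> pred P) (mul br : P -> P -> P) : Prop := {
  ps_super : super_space hom;
  ps_mul_bilin : bilinear_op mul;
  ps_br_bilin : bilinear_op br;
  ps_mul_even : forall a b x y, hom a x -> hom b y -> hom (a (+) b) (mul x y);
  ps_br_even : forall a b x y, hom a x -> hom b y -> hom (a (+) b) (br x y);
  ps_mul_assoc : forall x y z, mul x (mul y z) = mul (mul x y) z;
  ps_mul_scomm : forall a b x y, hom a x -> hom b y ->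
      mul x y = ssign K a b *: mul y x;
  ps_br_santi : forall a b x y, hom a x -> hom b y ->
      br x y = - (ssign K a b *: br y x);
  ps_br_jacobi : forall a b c x y z, hom a x -> hom b y -> hom c z ->
      ssign K c a *: br x (br y z) + ssign K a b *: br y (br z x)
      + ssign K b c *: br z (br x y) = 0;
  ps_leibniz : forall a b c x y z, hom a x -> hom b y -> hom c z ->
      br x (mul y z) = mul (br x y) z + ssign K a b *: mul y (br x z)
}.

Definition nprod (K : fieldType) (P : lmodType K) (mul br : P -> P -> P) (x y : P) : P :=
  mul x y + br x y.

(* Powers: npow 1 = y, npow (n+2) = y (npow (n+1)); npow 0 is an unused dummy (0). *)
Definition npow (K : fieldType) (P : lmodType K) (mul br : P -> P -> P) (y : P) (n : nat) : P :=
  match n with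
  | 0 => 0
  | n'.+1 => iter n' (nprod mul br y) y
  end.

Inductive gen_subalg (K : fieldType) (P : lmodType K) (mul br : P -> P -> P) (y : P) : P -> Prop :=
  | gen_base : gen_subalg mul br y y
  | gen_zero : gen_subalg mul br y 0
  | gen_add : forall a b, gen_subalg mul br y a -> gen_subalg mul br y b -> gen_subalg mul br y (a + b)
  | gen_scale : forall (k : K) a, gen_subalg mul br y a -> gen_subalg mul br y (k *: a)
  | gen_prod : forall a b, gen_subalg mul br y a -> gen_subalg mul br y b ->
      gen_subalg mul br y (nprod mul br a b).

(* Main.v *)
Require Import Defs.
From HB Require Import structures.
From mathcomp Require Import all_boot all_order all_algebra.
From mathcomp Require Import zify.
Import GRing.Theory.
Set Implicit Arguments. Unset Strict Implicit.
Local Open Scope ring_scope.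

Section Bil.
Variables (K : fieldType) (P : lmodType K) (op : P -> P -> P).
Hypothesis Hb : bilinear_op op.

Lemma op0l z : op 0 z = 0.
Proof.
have h := Hb.1 1 0 0 z; rewrite scaler0 addr0 scale1r in h.
by have := congr1 (fun v => v - op 0 z) h; rewrite subrr addrK => /esym.
Qed.
Lemma op0r z : op z 0 = 0.
Proof.
have h := Hb.2 1 z 0 0; rewrite scaler0 addr0 scale1r in h.
by have := congr1 (fun v => v - op z 0) h; rewrite subrr addrK => /esym.
Qed.
Lemma opDl x y z : op (x + y) z = op x z + op y z.
Proof. by have := Hb.1 1 x y z; rewrite !scale1r. Qed.
Lemma opDr x y z : op z (x + y) = op z x + op z y.
Proof. by have := Hb.2 1 z x y; rewrite !scale1r. Qed.
Lemma opZl k x z : op (k *: x) z = k *: op x z.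
Proof. by have := Hb.1 k x 0 z; rewrite !addr0 op0l addr0. Qed.
Lemma opZr k x z : op z (k *: x) = k *: op z x.
Proof. by have := Hb.2 k z x 0; rewrite !addr0 op0r addr0. Qed.
Lemma opNr x z : op z (- x) = - op z x.
Proof. by rewrite -scaleN1r opZr scaleN1r. Qed.
End Bil.

Lemma ssignF (K : fieldType) a : ssign K a false = 1.
Proof. by rewrite /ssign andbF expr0. Qed.
Lemma ssignFl (K : fieldType) a : ssign K false a = 1.
Proof. by rewrite /ssign expr0. Qed.

Section Main.
Variables (K : fieldType) (P : lmodType K)
    (hom : bool -> pred P) (mul br : P -> P -> P) (y : P) (d : bool).
Hypothesis Hch : [pchar K] =i pred0.
Hypothesis HP : poisson_superalgebra hom mul br.
Hypothesis Hy : hom d y.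

Let mb := ps_mul_bilin HP.
Let bb := ps_br_bilin HP.

Lemma nat_neq0 (n : nat) : (n != 0)%N -> (n%:R : K) != 0.
Proof. by move=> h; rewrite (pcharf0P _).1. Qed.

Lemma scale_cancel (k : K) (v : P) : k != 0 -> k *: v = 0 -> v = 0.
Proof. by move=> hk h; rewrite -[v]scale1r -(mulVf hk) -scalerA h scaler0. Qed.

Lemma self_zero (v : P) : v = - v -> v = 0.
Proof.
move=> h; apply: (@scale_cancel 2%:R); first exact: nat_neq0.
by rewrite scaler_nat mulr2n {2}h subrr.
Qed.

Let w := nprod mul br y y.

Lemma w_hom : hom false w.
Proof.
rewrite /w /nprod -(addbb d).
apply: (homD (ps_super HP) (ps_mul_even HP Hy Hy) (ps_br_even HP Hy Hy)).
Qed.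

Lemma br_y_w : br y w = 0.
Proof.
case: d Hy => hy.
- have yy : mul y y = 0.
    apply: self_zero.
    by rewrite {1}(ps_mul_scomm HP hy hy) /ssign /= expr1 scaleN1r.
  rewrite /w /nprod yy add0r.
  have J := ps_br_jacobi HP hy hy hy.
  rewrite /ssign /= expr1 !scaleN1r -!opprD in J.
  apply: (@scale_cancel 3%:R); first exact: nat_neq0.
  by rewrite scaler_nat !mulrS mulr0n addr0 addrA; apply/eqP; rewrite -oppr_eq0 J.
- have yy : br y y = 0.
    apply: self_zero.
    by rewrite {1}(ps_br_santi HP hy hy) ssignF scale1r.
  rewrite /w /nprod yy addr0 (ps_leibniz HP hy hy hy) yy ssignF scale1r.
  by rewrite (op0l mb) (op0r mb) addr0.
Qed.

Lemma br_w_y : br w y = 0.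
Proof. by rewrite (ps_br_santi HP w_hom Hy) br_y_w scaler0 oppr0. Qed.

Lemma br_w_w : br w w = 0.
Proof. by apply: self_zero; rewrite {1}(ps_br_santi HP w_hom w_hom) ssignF scale1r. Qed.

Lemma mul_y_w : mul y w = mul w y.
Proof. by rewrite (ps_mul_scomm HP Hy w_hom) ssignF scale1r. Qed.

Lemma hom_iter c z k : hom c z -> hom c (iter k (mul w) z).
Proof.
move=> hz; elim: k => //= k IH.
by have := ps_mul_even HP w_hom IH.
Qed.

Lemma iterD u v k : iter k (mul w) (u + v) = iter k (mul w) u + iter k (mul w) v.
Proof. by elim: k => //= k ->; rewrite (opDr mb). Qed.
Lemma iter0 k : iter k (mul w) 0 = 0.
Proof. by elim: k => //= k ->; rewrite (op0r mb). Qed.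

Lemma mul_iter z k : mul y (iter k (mul w) z) = iter k (mul w) (mul y z).
Proof.
elim: k => //= k <-.
by rewrite (ps_mul_assoc HP) mul_y_w -(ps_mul_assoc HP).
Qed.

Lemma br_iter c z k : hom c z -> br y (iter k (mul w) z) = iter k (mul w) (br y z).
Proof.
move=> hz; elim: k => //= k <-.
rewrite (ps_leibniz HP Hy w_hom (hom_iter k hz)) br_y_w (op0l mb) add0r.
by rewrite ssignF scale1r.
Qed.

Definition Oi k := iter k (mul w) y.
Definition Ei k := iter k (mul w) w.

Lemma npow_form k : npow mul br y (k.*2.+1) = Oi k /\ npow mul br y (k.*2.+2) = Ei k.
Proof.
have S n : npow mul br y n.+2 = nprod mul br y (npow mul br y n.+1).
  by [].
elim: k => [|k [IH1 IH2]]; first by split.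
have e1 : npow mul br y (k.+1).*2.+1 = Oi k.+1.
  rewrite doubleS S IH2 /nprod /Ei mul_iter (br_iter _ w_hom) br_y_w iter0 addr0.
  by rewrite mul_y_w /Oi iterSr.
split => //.
rewrite S e1 /nprod /Oi mul_iter (br_iter _ Hy) -iterD.
by rewrite /Ei iterSr.
Qed.

Definition good (x : P) := exists c, hom c x /\ br x w = 0.

Lemma good_mul x : good x -> good (mul w x).
Proof.
case=> c [hx bx]; exists c; split; first by have := ps_mul_even HP w_hom hx.
have hwx : hom c (mul w x) by have := ps_mul_even HP w_hom hx.
rewrite (ps_br_santi HP hwx w_hom) (ps_leibniz HP w_hom w_hom hx) br_w_w (op0l mb).
rewrite add0r (ps_br_santi HP w_hom hx) bx scaler0 oppr0 (op0r mb).
by rewrite !scaler0 oppr0.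
Qed.

Lemma good_iter x k : good x -> good (iter k (mul w) x).
Proof. by move=> gx; elim: k => //= k; apply: good_mul. Qed.

Lemma nprod_mull Z T : good Z -> good T ->
  nprod mul br (mul w Z) T = mul w (nprod mul br Z T).
Proof.
case=> cZ [hZ bZ] [cT [hT bT]].
have hwZ : hom cZ (mul w Z) by have := ps_mul_even HP w_hom hZ.
rewrite /nprod (opDr mb) -(ps_mul_assoc HP); congr (_ + _).
rewrite (ps_br_santi HP hwZ hT) (ps_leibniz HP hT w_hom hZ) bT (op0l mb) add0r.
rewrite ssignF scale1r (ps_br_santi HP hZ hT).
by rewrite (opNr mb) (opZr mb).
Qed.

Lemma nprod_mulr Z T : good Z -> good T ->
  nprod mul br Z (mul w T) = mul w (nprod mul br Z T).
Proof.
case=> cZ [hZ bZ] [cT [hT bT]].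
rewrite /nprod (opDr mb) (ps_mul_assoc HP) (ps_mul_scomm HP hZ w_hom) ssignF scale1r.
rewrite -(ps_mul_assoc HP); congr (_ + _).
by rewrite (ps_leibniz HP hZ w_hom hT) bZ (op0l mb) add0r ssignF scale1r.
Qed.

Lemma nprod_iter Z T a b : good Z -> good T ->
  nprod mul br (iter a (mul w) Z) (iter b (mul w) T) = iter (a + b) (mul w) (nprod mul br Z T).
Proof.
move=> gZ gT; elim: a => [|a IH].
  elim: b => //= b IH; by rewrite nprod_mulr ?IH //; apply: good_iter.
by rewrite addSn /= nprod_mull ?IH //; apply: good_iter.
Qed.

Lemma good_y : good y. Proof. by exists d; split => //; exact: br_y_w. Qed.
Lemma good_w : good w. Proof. by exists false; split; [exact: w_hom | exact: br_w_w]. Qed.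

Lemma npow_split n : (1 <= n)%N -> exists k, n = k.*2.+1 \/ n = k.*2.+2.
Proof.
move=> hn; exists (n.-1./2).
have := odd_double_half n.-1; case: (odd _) => /= h; [right|left]; lia.
Qed.

Lemma part1 p q : (1 <= p)%N -> (1 <= q)%N ->
  nprod mul br (npow mul br y p) (npow mul br y q) = npow mul br y (p + q).
Proof.
have gy := good_y; have gw := good_w.
move=> /npow_split [a [->|->]] /npow_split [b [->|->]];
  rewrite ?(npow_form a).1 ?(npow_form a).2 ?(npow_form b).1 ?(npow_form b).2
          /Oi /Ei nprod_iter //.
- have -> : (a.*2.+1 + b.*2.+1 = (a + b).*2.+2)%N by lia.
  by rewrite (npow_form _).2.
- have -> : (a.*2.+1 + b.*2.+2 = (a + b).+1.*2.+1)%N by lia.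
  rewrite (npow_form _).1 /Oi iterSr /nprod br_y_w addr0 mul_y_w //.
- have -> : (a.*2.+2 + b.*2.+1 = (a + b).+1.*2.+1)%N by lia.
  by rewrite (npow_form _).1 /Oi iterSr /nprod br_w_y addr0.
- have -> : (a.*2.+2 + b.*2.+2 = (a + b).+1.*2.+2)%N by lia.
  by rewrite (npow_form _).2 /Ei iterSr /nprod br_w_w addr0.
Qed.

Inductive Span : P -> Prop :=
  | sp_pow n : (1 <= n)%N -> Span (npow mul br y n)
  | sp_zero : Span 0
  | sp_add a b : Span a -> Span b -> Span (a + b)
  | sp_scale (k : K) a : Span a -> Span (k *: a).

Let nb : bilinear_op (nprod mul br).
Proof.
split=> k x y1 z; rewrite /nprod.
- by rewrite mb.1 bb.1 scalerDr addrACA.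
- by rewrite mb.2 bb.2 scalerDr addrACA.
Qed.

Lemma span_prod a b : Span a -> Span b -> Span (nprod mul br a b).
Proof.
elim=> [n hn||a1 a2 _ IH1 _ IH2|k a1 _ IH] hb.
- elim: hb => [m hm||b1 b2 _ IH1 _ IH2|k b1 _ IH].
  + rewrite part1 //; constructor; lia.
  + rewrite (op0r nb); constructor.
  + rewrite (opDr nb); constructor => //.
  + rewrite (opZr nb); constructor => //.
- rewrite (op0l nb); constructor.
- rewrite (opDl nb); constructor; auto.
- rewrite (opZl nb); constructor; auto.
Qed.

Lemma gen_span a : gen_subalg mul br y a -> Span a.
Proof.
elim=> [||a1 a2 _ ? _ ?|k a1 _ ?|a1 a2 _ ? _ ?]; try by constructor.
- have -> : y = npow mul br y 1 by [].
  by constructor.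
- exact: span_prod.
Qed.

Lemma span_assoc a b c : Span a -> Span b -> Span c ->
  nprod mul br (nprod mul br a b) c = nprod mul br a (nprod mul br b c).
Proof.
move=> ha hb hc; elim: ha => [p hp||a1 a2 _ IH1 _ IH2|k a1 _ IH].
- elim: hb => [q hq||b1 b2 _ IH1 _ IH2|k b1 _ IH].
  + elim: hc => [r hr||c1 c2 _ IH1 _ IH2|k c1 _ IH].
    * rewrite !part1 ?addnA //; lia.
    * by rewrite !(op0r nb).
    * rewrite (opDr nb c1 c2 (npow mul br y q)) (opDr nb _ _ (npow mul br y p)).
      by rewrite (opDr nb c1 c2) IH1 IH2.
    * by rewrite !(opZr nb) IH.
  + by rewrite (op0r nb) (op0l nb) !(op0r nb).
  + rewrite (opDr nb b1 b2 (npow mul br y p)) (opDl nb _ _ c) IH1 IH2.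
    by rewrite (opDl nb b1 b2 c) (opDr nb _ _ (npow mul br y p)).
  + rewrite (opZr nb k b1 (npow mul br y p)) (opZl nb k _ c) IH.
    by rewrite (opZl nb k b1 c) (opZr nb k _ (npow mul br y p)).
- by rewrite (op0l nb b) (op0l nb c) (op0l nb (nprod mul br b c)).
- by rewrite (opDl nb a1 a2 b) (opDl nb _ _ c) IH1 IH2 (opDl nb a1 a2).
- by rewrite (opZl nb k a1 b) (opZl nb k _ c) IH (opZl nb k a1).
Qed.

End Main.

Theorem mainTheorem3 (K : fieldType) (P : lmodType K)
    (hom : bool -> pred P) (mul br : P -> P -> P) (y : P) :
  [pchar K] =i pred0 ->
  poisson_superalgebra hom mul br ->
  (exists d : bool, hom d y) ->
  [/\ (forall p q : nat, (1 <= p)%N -> (1 <= q)%N ->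
         nprod mul br (npow mul br y p) (npow mul br y q) = npow mul br y (p + q)),
      (forall a b c, gen_subalg mul br y a -> gen_subalg mul br y b -> gen_subalg mul br y c ->
         nprod mul br (nprod mul br a b) c = nprod mul br a (nprod mul br b c))
    & (hom true y -> mul y y = 0 /\ npow mul br y 2 = br y y)].
Proof.
move=> Hch HP [d Hy]; split.
- exact: part1 Hch HP Hy.
- move=> a b c ha hb hc.
  have G := gen_span Hch HP Hy.
  exact: (span_assoc Hch HP Hy (G _ ha) (G _ hb) (G _ hc)).
- move=> hy.
  have yy : mul y y = 0.
    apply: (self_zero Hch).
    by rewrite {1}(ps_mul_scomm HP hy hy) /ssign /= expr1 scaleN1r.
  by split => //; rewrite /= /nprod yy add0r.
Qed.
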